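(* Let $\pi$ be a probability vector on $[K]$, let $\ell\in[-1,1]^K$ be fixed, and let $A\sim\pi$. Then for every $i\in[K]$, $$\mathbb{E}\left[\left(\ell_i\mathbb{I}(A=i)-\frac{\pi_i\sqrt{\pi_A}\,\ell_A}{\sum_{j=1}^K\pi_j^{3/2}}\right)^2\right]\le 5\,\pi_i(1-\pi_i).$$
   Context: The expectation is over $A\sim\pi$ only. *)

(* Defs.v *)
From mathcomp Require Import all_boot all_order all_algebra.
Set Implicit Arguments. Unset Strict Implicit. Unset Printing Implicit Defensive.
Import Order.TTheory GRing.Theory Num.Theory.
Local Open Scope ring_scope.

Definition prob_vec (R : realFieldType) (K : nat) (pi : 'I_K -> R) : Prop :=
  (forall a, 0 <= pi a) /\ \sum_(a < K) pi a = 1.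

Definition expect (R : realFieldType) (K : nat) (pi : 'I_K -> R) (f : 'I_K -> R) : R :=
  \sum_(a < K) pi a * f a.

Definition pow32 (R : rcfType) (x : R) : R := x * Num.sqrt x.

(* Main.v *)
Require Import Defs.
From mathcomp Require Import all_boot all_order all_algebra.
From mathcomp Require Import ring lra.
Import Order.TTheory GRing.Theory Num.Theory.
Local Open Scope ring_scope.
Lemma fin1 (R : rcfType) (p s T Q : R) : 0 <= p -> p <= 1 -> 0 <= s -> s * s = p ->
  0 <= T -> T <= 1 - p -> p * Q <= T * (2 * p * s + T) -> Q <= (1-p)*(1-p) ->
  p * Q <= 2 * (1 - p) * ((p * s + T) * (p * s + T)).
Proof.
move=> p0 p1 s0 ss T0 T1 h1 h2.
have u0 : 0 <= p * s by exact: mulr_ge0.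
have S1 : p * p * p <= (p * s + T) * (p * s + T).
  have -> : p * p * p = (p * s) * (p * s) by rewrite -ss; ring.
  apply: ler_pM => //; lra.
have S2 : T * (2 * p * s + T) <= (p * s + T) * (p * s + T).
  move: u0; rewrite -mulrA; move: (p * s) => u u0; nra.
have V0 : 0 <= (p * s + T) * (p * s + T) by apply: mulr_ge0; lra.
move: S1 S2 V0; move: ((p * s + T) * (p * s + T)) => V S1 S2 V0.
have [h|h] := lerP p (1/2).
  have : V <= 2 * (1 - p) * V by nra.
  move: S2 h1; move: (T * (2 * p * s + T)) => W; lra.
have h3 : p * Q <= p * ((1-p)*(1-p)) by nra.
have h4 : 1 - p <= 2 * p * p by nra.
have h5 : p * (1 - p) * (1 - p) <= p * (1 - p) * (2 * p * p).
  apply: ler_wpM2l => //; nra.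
nra.
Qed.
Lemma fin2 (R : rcfType) (p s T : R) : 0 <= p -> p <= 1 -> 0 <= s -> s * s = p ->
  0 <= T -> T <= 1 - p -> T * T <= 3 * (1 - p) * ((p * s + T) * (p * s + T)).
Proof.
move=> p0 p1 s0 ss T0 T1.
have u0 : 0 <= p * s by exact: mulr_ge0.
have [h|h] := lerP p (2/3).
  have : T * T <= (p * s + T) * (p * s + T).
    move: u0; move: (p * s) => u u0; nra.
  move: ((p * s + T) * (p * s + T)) => V; nra.
have hs: 4/5 <= s by nra.
have h6 : 1 <= 6 * (p * s) by nra.
have : T <= 3 * ((p * s + T) * (p * s + T)).
  move: h6 u0; move: (p * s) => u h6 u0; nra.
move: ((p * s + T) * (p * s + T)) => V; nra.
Qed.

Lemma single_le (K : nat) (R : rcfType) (F : 'I_K -> R) (i a : 'I_K) :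
  (forall b, 0 <= F b) -> a != i -> F a <= \sum_(b | b != i) F b.
Proof.
move=> F0 ai; rewrite (bigD1 a) //=; rewrite lerDl; exact: sumr_ge0.
Qed.

Theorem mainTheorem8 (R : rcfType) (K : nat) (pi : 'I_K -> R) (l : 'I_K -> R)
  (hpi : prob_vec pi) (hl : forall a, -1 <= l a <= 1) (i : 'I_K) :
  expect pi (fun A => (l i * (A == i)%:R
      - pi i * Num.sqrt (pi A) * l A / (\sum_(j < K) pow32 (pi j))) ^+ 2)
  <= 5 * pi i * (1 - pi i).
Proof.
case: hpi => h0 h1.
set S := \sum_(j < K) pow32 (pi j).
set p := pi i.
set s := Num.sqrt p.
have sqE : forall a, Num.sqrt (pi a) * Num.sqrt (pi a) = pi a.
  by move=> a; rewrite -expr2 sqr_sqrtr.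
have sq0 : forall a, 0 <= Num.sqrt (pi a) by move=> a; exact: sqrtr_ge0.
have hsum : 1 = p + \sum_(a | a != i) pi a by rewrite -h1 (bigD1 i).
have pa1 : forall a, a != i -> pi a <= 1 - p.
  move=> a ai; have := @single_le _ _ pi i a h0 ai; lra.
have p0 : 0 <= p by exact: h0.
have rest0 : 0 <= \sum_(a | a != i) pi a by exact: sumr_ge0.
have p1 : p <= 1 by lra.
have pi1 : forall a, pi a <= 1.
  move=> a; case: (eqVneq a i) => [->|ai]; first exact: p1.
  by have := pa1 a ai; lra.
have sq1 : forall a, Num.sqrt (pi a) <= 1.
  by move=> a; have := sqE a; have := sq0 a; have := pi1 a; nra.
set T := \sum_(a | a != i) pi a * Num.sqrt (pi a).
have HS : S = p * s + T by rewrite /S (bigD1 i) //=.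
have T0 : 0 <= T by apply: sumr_ge0 => a _; exact: mulr_ge0.
have T1 : T <= 1 - p.
  have -> : 1 - p = \sum_(a | a != i) pi a by lra.
  apply: ler_sum => a _; have := sq1 a; have := h0 a; nra.
set Q := \sum_(a | a != i) pi a * pi a.
have Q1 : Q <= (1 - p) * (1 - p).
  have -> : (1 - p) * (1 - p) = \sum_(a | a != i) pi a * (1 - p).
    have rest : \sum_(a | a != i) pi a = 1 - p by lra.
    by rewrite -mulr_suml rest.
  apply: ler_sum => a ai; apply: ler_wpM2l => //; exact: pa1.
have s0 : 0 <= s by exact: sqrtr_ge0.
have ss : s * s = p by exact: sqE.
have QT : p * Q <= T * (2 * p * s + T).
  rewrite /T mulr_suml mulr_sumr; apply: ler_sum => a ai.
  have key : p * Num.sqrt (pi a) <= 2 * p * s + T.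
    have [h|h] := lerP (Num.sqrt (pi a)) (2 * s).
      have : p * Num.sqrt (pi a) <= p * (2 * s) by apply: ler_wpM2l.
      have : 0 <= p * s by exact: mulr_ge0.
      lra.
    have pp : p <= pi a by rewrite -ss -sqE; nra.
    have : pi a * Num.sqrt (pi a) <= T by apply: (@single_le _ _ (fun b => pi b * Num.sqrt (pi b))) => // b; exact: mulr_ge0.
    have : p * Num.sqrt (pi a) <= pi a * Num.sqrt (pi a) by apply: ler_wpM2r.
    have : 0 <= p * s by exact: mulr_ge0.
    lra.
  have -> : p * (pi a * pi a) = (pi a * Num.sqrt (pi a)) * (p * Num.sqrt (pi a)).
    by rewrite -{1}(sqE a); ring.
  apply: ler_wpM2l => //; exact: mulr_ge0.
have Spos : 0 < S.
  rewrite lt0r; apply/andP; split; last first.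
    by rewrite /S; apply: sumr_ge0 => a _; rewrite /pow32; exact: mulr_ge0.
  apply/negP => /eqP S0.
  have all0 : forall a, pi a = 0.
    move=> a; have := psumr_eq0P (P := predT) (fun b _ => mulr_ge0 (h0 b) (sq0 b)) S0 (i := a) isT.
    rewrite /= => e; have := sqE a; have := sq0 a; have := h0 a; nra.
  have : \sum_(a < K) pi a = 0 by apply: big1 => b _; exact: all0.
  by rewrite h1; apply/eqP; rewrite oner_eq0.
have F1 := @fin1 _ p s T Q p0 p1 s0 ss T0 T1 QT Q1.
have F2 := @fin2 _ p s T p0 p1 s0 ss T0 T1.
rewrite /expect (bigD1 i) //= eqxx.
have Sn0 : S != 0 by rewrite gt_eqF.
have E1 : p * (l i * 1%:R - p * s * l i / S) ^+ 2 = p * (l i * l i) * (T * T) / (S * S).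
  by rewrite HS; field; rewrite -HS.
rewrite E1.
have E2 : \sum_(a | a != i) pi a * (l i * (a == i)%:R - p * Num.sqrt (pi a) * l a / S) ^+ 2
   <= \sum_(a | a != i) (p * p / (S * S)) * (pi a * pi a).
  apply: ler_sum => a ai; rewrite (negbTE ai).
  have -> : pi a * (l i * 0%:R - p * Num.sqrt (pi a) * l a / S) ^+ 2 =
       (p * p / (S * S)) * (pi a * (Num.sqrt (pi a) * Num.sqrt (pi a))) * (l a * l a).
    by field.
  rewrite sqE.
  have c0 : 0 <= (p * p / (S * S)) * (pi a * pi a).
    apply: mulr_ge0; last exact: mulr_ge0.
    apply: divr_ge0; [exact: mulr_ge0 | apply: mulr_ge0; exact: ltW].
  have := hl a; move: c0; move: ((p * p / (S * S)) * (pi a * pi a)) => c c0 /andP[hla1 hla2].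
  have : l a * l a <= 1 by nra.
  move: (l a * l a) => m hm; nra.
rewrite -mulr_sumr in E2.
have li1 : l i * l i <= 1 by case/andP: (hl i) => ? ?; nra.
apply: le_trans (lerD (lexx _) E2) _.
have SS : 0 < S * S by exact: mulr_gt0.
have -> : p * (l i * l i) * (T * T) / (S * S) + p * p / (S * S) * Q
   = (p * (l i * l i) * (T * T) + p * p * Q) / (S * S) by field.
rewrite ler_pdivrMr //.
have : p * (l i * l i) * (T * T) <= p * (T * T).
  rewrite -mulrA; apply: ler_wpM2l => //; have : 0 <= T * T by exact: mulr_ge0.
  nra.
have : p * (T * T) <= p * (3 * (1 - p) * ((p * s + T) * (p * s + T))) by apply: ler_wpM2l.
have : p * (p * Q) <= p * (2 * (1 - p) * ((p * s + T) * (p * s + T))) by apply: ler_wpM2l.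
rewrite -HS; move: (S * S) => V.
rewrite -!mulrA.
nra.
Qed.
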